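(* Under Conditions 1 and 2, there exist constants $n_0\ge1$ and $C>0$ such that for all $n>n_0$, $\sup_{t\ge0}R^{(n)}_\beta(t)\le C$.
   Context: Notation: $\mathbb Z_+=\{1,2,\dots\}$, $\mathbb R_+=[0,\infty)$. For each $n\ge1$: $\lambda^{(n)}>0$; a probability $\Lambda^{(n)}$ on $\mathbb R_+$ with tail $\bar\Lambda^{(n)}(t)=\Lambda^{(n)}((t,\infty))$, $\eta^{(n)}=\int_0^\infty y\Lambda^{(n)}(dy)$, $\sigma^{(n)}=\frac12\int_0^\infty y^2\Lambda^{(n)}(dy)$ finite; probability laws $(p_k^{(n)})_{k\ge1}$, $(q_k^{(n)})_{k\ge1}$ on $\mathbb Z_+$ with generating functions $g^{(n)},h^{(n)}$, $m^{(n)}=\sum_kkp_k^{(n)}<\infty$; $\gamma_n>0$ with $\gamma_n\to\infty$, $\gamma_n/n\to\gamma_*\in[0,\infty)$. $\phi^{(n)}(z)=n\gamma_n[g^{(n)}(1-z/n)-(1-z/n)]$, $\psi^{(n)}(z)=\gamma_n[1-h^{(n)}(1-z/n)]$ for $z\in[0,n]$. Condition 1: (i) $\lambda^{(n)}\to\lambda>0$, $\eta^{(n)}\to\eta>0$, $\sigma^{(n)}\to\sigma>0$, $\gamma_n(1-\lambda^{(n)}\eta^{(n)})\to b\in\mathbb R$; (ii) $\psi^{(n)}\to\psi$ uniformly on compacts of $[0,\infty)$; (iii) $\{\phi^{(n)}\}$ is uniformly Lipschitz on bounded intervals and converges uniformly on compacts to a continuous $\phi$. Under Condition 1, $\lambda\eta=1$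 and $m:=\lim_n\gamma_n(1-m^{(n)})$ exists (so $\gamma_n(1-\lambda^{(n)}\eta^{(n)}m^{(n)})\to b+m$). Condition 2 (for some $\alpha\in(1,2)$): (1) there are $C,k_0>0$ with $n\gamma_n\sum_{k\ge k_0}(k/n)^\alpha p^{(n)}_k+\sum_kk^\alpha q^{(n)}_k\le C$ for all $n$, and $\lim_{k_1\to\infty}\limsup_n\gamma_n\sum_{k\ge k_1}kp^{(n)}_k=0$; (2) there are $C_0>0$ and a probability $\Lambda^*$ on $\mathbb R_+$ with $\int t^{2\alpha}\Lambda^*(dt)<\infty$ and $\bar\Lambda^{(n)}\le C_0\bar\Lambda^*$ for all $n$. Fix $\beta\in[0,\infty)$ with $\beta>-(b+m)/(\sigma\lambda)$. Let $R^{(n)}$ be the unique locally integrable solution of $R^{(n)}(t)=\lambda^{(n)}m^{(n)}\bar\Lambda^{(n)}(t)+\lambda^{(n)}m^{(n)}\int_0^tR^{(n)}(t-s)\bar\Lambda^{(n)}(s)ds$, $t\ge0$, and $R^{(n)}_\beta(t)=e^{-\beta t/\gamma_n}R^{(n)}(t)$. *)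

(* Defs.v *)
From Stdlib Require Import Reals Lra ClassicalEpsilon.
Open Scope R_scope.

(* Value of a convergent series (chosen by classical epsilon; meaningful
   only when the series converges). *)
Definition series_value (u : nat -> R) : R :=
  epsilon (inhabits 0) (fun l => infinite_sum u l).

Definition gen_fun (p : nat -> R) (x : R) : R :=
  series_value (fun k => p k * x ^ k).

(* p is a probability law on Z_+ = {1,2,...} (p 0 = 0). *)
Definition prob_Zplus (p : nat -> R) : Prop :=
  p 0%nat = 0 /\ (forall k, 0 <= p k) /\ infinite_sum p 1.

Definition is_RInt (f : R -> R) (a b I : R) : Prop :=
  exists pr : Riemann_integrable f a b, RiemannInt pr = I.

Definition is_improper_int0 (f : R -> R) (l : R) : Prop :=
  (forall T, 0 <= T -> exists I, is_RInt f 0 T I) /\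
  (forall eps, 0 < eps -> exists T0, forall T I,
      T0 <= T -> 0 <= T -> is_RInt f 0 T I -> Rabs (I - l) < eps).

(* F is the tail function t |-> Lambda((t,oo)), t >= 0, of a probability
   measure Lambda on R_+: values in [0,1], nonincreasing, right-continuous,
   tending to 0 at infinity.  (Every such F is the tail of a unique
   probability measure on R_+.) *)
Definition is_tail (F : R -> R) : Prop :=
  (forall t, 0 <= t -> 0 <= F t <= 1) /\
  (forall s t, 0 <= s -> s <= t -> F t <= F s) /\
  (forall t, 0 <= t -> forall eps, 0 < eps -> exists d, 0 < d /\
      forall u, t <= u -> u < t + d -> Rabs (F u - F t) < eps) /\
  (forall eps, 0 < eps -> exists T, forall t, T <= t -> 0 <= t -> F t < eps).

Definition phi_n (p : nat -> R) (n : nat) (gam z : R) : R :=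
  INR n * gam * (gen_fun p (1 - z / INR n) - (1 - z / INR n)).

Definition psi_n (q : nat -> R) (n : nat) (gam z : R) : R :=
  gam * (1 - gen_fun q (1 - z / INR n)).

(* f n (defined on [0,n]) converges to g uniformly on compacts of [0,oo). *)
Definition unif_cv_compacts (f : nat -> R -> R) (g : R -> R) : Prop :=
  forall K eps, 0 < eps -> exists N, forall n z,
    (N <= n)%nat -> 0 <= z -> z <= K -> z <= INR n -> Rabs (f n z - g z) < eps.

Definition unif_lipschitz_bounded (f : nat -> R -> R) : Prop :=
  forall K, exists L, forall n x y, (1 <= n)%nat ->
    0 <= x -> x <= K -> x <= INR n -> 0 <= y -> y <= K -> y <= INR n ->
    Rabs (f n x - f n y) <= L * Rabs (x - y).

Definition continuous_on_Rplus (g : R -> R) : Prop :=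
  forall x, 0 <= x -> forall eps, 0 < eps -> exists d, 0 < d /\
    forall y, 0 <= y -> Rabs (y - x) < d -> Rabs (g y - g x) < eps.

(* Main.v *)
Require Import Defs.
From Stdlib Require Import Reals Lra Lia.
From Coquelicot Require RInt.
Open Scope R_scope.

Lemma isR_unique f a b I J : is_RInt f a b I -> is_RInt f a b J -> I = J.
Proof. intros [p1 <-] [p2 <-]. apply RiemannInt_P5. Qed.

Lemma isR_le f g a b I J : is_RInt f a b I -> is_RInt g a b J -> a <= b ->
  (forall x, a < x < b -> f x <= g x) -> I <= J.
Proof. intros [p1 <-] [p2 <-] Hab H. apply RiemannInt_P19; auto. Qed.

Lemma isR_const c a b : is_RInt (fun _ => c) a b (c * (b - a)).
Proof. exists (RiemannInt_P14 a b c). apply RiemannInt_P15. Qed.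

Lemma isR_ext f g a b I : a <= b -> (forall x, a <= x <= b -> f x = g x) ->
  is_RInt f a b I -> is_RInt g a b I.
Proof.
  intros Hab H [p <-].
  assert (H' : forall x, Rmin a b <= x <= Rmax a b -> f x = g x).
  { intros x Hx; apply H; unfold Rmin, Rmax in Hx; destruct (Rle_dec a b); lra. }
  exists (Riemann_integrable_ext g H' p).
  apply RiemannInt_P18; auto. intros x Hx. symmetry; apply H. lra.
Qed.

Lemma isR_lin f g a b I J l : is_RInt f a b I -> is_RInt g a b J ->
  is_RInt (fun x => f x + l * g x) a b (I + l * J).
Proof.
  intros [p1 <-] [p2 <-]. exists (RiemannInt_P10 l p1 p2).
  apply RiemannInt_P13.
Qed.

Lemma isR_scal f a b I k : a <= b -> is_RInt f a b I -> is_RInt (fun x => k * f x) a b (k * I).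
Proof.
  intros Hab H. pose proof (isR_lin _ _ a b _ _ k (isR_const 0 a b) H) as H2.
  replace (k * I) with (0 * (b - a) + k * I) by ring.
  eapply isR_ext; [exact Hab| |exact H2]. intros; simpl; ring.
Qed.

Lemma isR_plus f g a b I J : a <= b -> is_RInt f a b I -> is_RInt g a b J ->
  is_RInt (fun x => f x + g x) a b (I + J).
Proof.
  intros Hab H1 H2. pose proof (isR_lin _ _ a b _ _ 1 H1 H2) as H3.
  replace (I + J) with (I + 1 * J) by ring.
  eapply isR_ext; [exact Hab| |exact H3]. intros; simpl; ring.
Qed.

Lemma isR_split f a b c I : is_RInt f a b I -> a <= c <= b ->
  exists I1 I2, is_RInt f a c I1 /\ is_RInt f c b I2 /\ I1 + I2 = I.
Proof.
  intros [p <-] Hc.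
  exists (RiemannInt (RiemannInt_P22 p Hc)), (RiemannInt (RiemannInt_P23 p Hc)).
  split; [eexists; reflexivity|]. split; [eexists; reflexivity|].
  apply RiemannInt_P25; lra.
Qed.

Lemma isR_sub f a b c d I : is_RInt f a b I -> a <= c -> c <= d -> d <= b ->
  exists J, is_RInt f c d J.
Proof.
  intros H h1 h2 h3. destruct (isR_split f a b c I H) as (I1&I2&_&H2&_); [lra|].
  destruct (isR_split f c b d I2 H2) as (J1&_&HJ&_); [lra|]. eauto.
Qed.

Lemma isR_le_const f a b I c : is_RInt f a b I -> a <= b -> (forall x, a < x < b -> f x <= c) ->
  I <= c * (b - a).
Proof. intros H Hab Hc. eapply isR_le; [exact H|apply isR_const|exact Hab|exact Hc]. Qed.

Lemma isR_ge_const f a b I c : is_RInt f a b I -> a <= b -> (forall x, a < x < b -> c <= f x) ->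
  c * (b - a) <= I.
Proof. intros H Hab Hc. eapply isR_le; [apply isR_const|exact H|exact Hab|exact Hc]. Qed.

Lemma halve_limit x c E : 0 <= E -> (forall m, x <= c + E * (/2)^m) -> x <= c.
Proof.
  intros HE H. destruct (Rle_or_lt x c) as [|Hlt]; auto.
  assert (Hd : 0 < x - c) by lra.
  destruct (pow_lt_1_zero (/2) ltac:(rewrite Rabs_pos_eq; lra) ((x - c)/(E+1)))
    as [N HN].
  { apply Rdiv_lt_0_compat; lra. }
  specialize (HN N (Nat.le_refl N)). specialize (H N).
  rewrite Rabs_pos_eq in HN by (apply pow_le; lra).
  assert (E * (/2)^N <= (E+1) * (/2)^N) by (apply Rmult_le_compat_r; [apply pow_le|]; lra).
  assert ((E+1) * (/2)^N < x - c).
  { apply (Rmult_lt_compat_l (E+1)) in HN; [|lra].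
    replace ((E + 1) * ((x - c) / (E + 1))) with (x - c) in HN by (field; lra). lra. }
  lra.
Qed.

Lemma iter_bound (P : R -> Prop) (u : R -> R) c M :
  (forall x, P x -> u x <= M) ->
  (forall E, 0 <= E -> (forall x, P x -> u x <= c + E) -> forall x, P x -> u x <= c + E/2) ->
  forall x, P x -> u x <= c.
Proof.
  intros HM Hstep x Hx.
  set (E0 := Rmax (M - c) 0).
  assert (HE0 : 0 <= E0) by apply Rmax_r.
  assert (Hm : forall m, forall y, P y -> u y <= c + E0 * (/2)^m).
  { induction m; intros y Hy.
    - simpl. rewrite Rmult_1_r. pose proof (HM y Hy). pose proof (Rmax_l (M-c) 0). unfold E0. lra.
    - simpl. replace (E0 * (/2 * (/2)^m)) with ((E0 * (/2)^m)/2) by (unfold Rdiv; ring).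
      apply Hstep; auto. apply Rmult_le_pos; auto. apply pow_le; lra. }
  apply (halve_limit _ _ E0 HE0). intro m; apply Hm; auto.
Qed.


Lemma window_step (A : R) (g k u : R -> R) (h : R -> R -> R) (j : nat) (E : R) :
 0 < A -> 0 <= E ->
 (forall s, 0 <= s -> 0 <= g s /\ g s <= k s /\ g s <= A) ->
 (forall s t, 0 <= s -> s <= t -> g t <= g s) ->
 (forall s, 0 <= s -> s <= / (2*A) -> k s <= A) ->
 (forall T, 0 <= T -> exists I, is_RInt k 0 T I /\ I <= 1) ->
 (forall t, 0 <= t -> exists I, is_RInt (h t) 0 t I /\ u t = g t + I) ->
 (forall t s, 0 <= s <= t -> h t s = g s * u (t - s)) ->
 (forall x, 0 <= x <= (INR j + 1) * / (2*A) ->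
     u x <= (if Rle_dec x (/ (2*A)) then 2*A else 4*A)) ->
 (forall x, (INR j + 1) * / (2*A) <= x <= (INR j + 2) * / (2*A) -> u x <= 4*A + E) ->
 forall x, (INR j + 1) * / (2*A) <= x <= (INR j + 2) * / (2*A) -> u x <= 4*A + E/2.
Proof.
  intros HA HE Hg Hmon Hk Hint Heq Hh Hprev Hwin x Hx.
  set (d := / (2*A)) in *.
  assert (Hd : 0 < d) by (unfold d; apply Rinv_0_lt_compat; lra).
  assert (HAd : 2 * A * d = 1) by (unfold d; field; lra).
  assert (Hj : 0 <= INR j) by apply pos_INR.
  assert (Hjd : d <= (INR j + 1) * d) by nra.
  assert (Hx0 : 0 <= x) by nra.
  destruct (Heq x Hx0) as (I & HI & Hux).
  destruct (Hint x Hx0) as (K & HK & HK1).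
  set (a1 := x - (INR j + 1) * d).
  set (a2 := x - d).
  assert (Ha1 : 0 <= a1 <= d) by (unfold a1; nra).
  assert (Ha2 : a1 <= a2 <= x) by (unfold a1, a2; nra).
  destruct (isR_split _ _ _ a1 _ HI) as (I1 & I23 & HI1 & HI23 & EI); [lra|].
  destruct (isR_split _ _ _ a2 _ HI23) as (I2 & I3 & HI2 & HI3 & EI'); [lra|].
  destruct (isR_split _ _ _ a1 _ HK) as (K1 & K23 & HK1' & HK23 & EK); [lra|].
  destruct (isR_split _ _ _ a2 _ HK23) as (K2 & K3 & HK2 & HK3 & EK'); [lra|].
  assert (B1 : I1 <= (4*A + E) * K1).
  { eapply isR_le; [exact HI1| apply isR_scal; [lra|exact HK1'] | lra |].
    intros s Hs. rewrite Hh by lra. destruct (Hg s ltac:(lra)) as (g0 & gk & gA).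
    assert (u (x - s) <= 4*A + E) by (apply Hwin; unfold a1 in *; lra).
    apply Rle_trans with (g s * (4*A+E)); [apply Rmult_le_compat_l; lra|].
    rewrite Rmult_comm. apply Rmult_le_compat_l; lra. }
  assert (B2 : I2 <= (4*A) * K2).
  { eapply isR_le; [exact HI2| apply isR_scal; [lra|exact HK2] | lra |].
    intros s Hs. rewrite Hh by lra. destruct (Hg s ltac:(lra)) as (g0 & gk & gA).
    assert (u (x - s) <= 4*A).
    { pose proof (Hprev (x - s) ltac:(unfold a1, a2 in *; lra)) as Hp.
      destruct (Rle_dec (x - s) d); [unfold a2 in *; lra | exact Hp]. }
    apply Rle_trans with (g s * (4*A)); [apply Rmult_le_compat_l; lra|].
    rewrite Rmult_comm. apply Rmult_le_compat_l; lra. }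
  assert (B3 : I3 <= (2*A) * K3).
  { eapply isR_le; [exact HI3| apply isR_scal; [lra|exact HK3] | lra |].
    intros s Hs. rewrite Hh by lra. destruct (Hg s ltac:(lra)) as (g0 & gk & gA).
    assert (u (x - s) <= 2*A).
    { pose proof (Hprev (x - s) ltac:(unfold a1, a2 in *; lra)) as Hp.
      destruct (Rle_dec (x - s) d); [exact Hp | unfold a2 in *; lra]. }
    apply Rle_trans with (g s * (2*A)); [apply Rmult_le_compat_l; lra|].
    rewrite Rmult_comm. apply Rmult_le_compat_l; lra. }
  assert (C1 : K1 <= A * (a1 - 0)).
  { apply isR_le_const with k; auto; [lra|]. intros s Hs. apply Hk; lra. }
  assert (C3 : g x * (x - a2) <= K3).
  { apply isR_ge_const with k; auto; [lra|]. intros s Hs.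
    destruct (Hg s ltac:(unfold a2 in *; lra)) as (g0 & gk & gA).
    pose proof (Hmon s x ltac:(unfold a2 in *; lra) ltac:(lra)). lra. }
  assert (EK1 : E * K1 <= E / 2).
  { apply Rle_trans with (E * (A * d)). apply Rmult_le_compat_l; nra. nra. }
  replace (x - a2) with d in C3 by (unfold a2; ring).
  assert (F1 : 4*A*K <= 4*A) by nra.
  assert (F2 : g x <= 2*A*K3).
  { apply Rle_trans with (2*A*(g x * d)); [|apply Rmult_le_compat_l; lra].
    replace (2*A*(g x*d)) with (g x * (2*A*d)) by ring. rewrite HAd; lra. }
  rewrite Hux. nra.
Qed.

Lemma window_base (A : R) (g k u : R -> R) (h : R -> R -> R) (E : R) :
 0 < A -> 0 <= E ->
 (forall s, 0 <= s -> 0 <= g s /\ g s <= k s /\ g s <= A) ->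
 (forall s, 0 <= s -> s <= / (2*A) -> k s <= A) ->
 (forall t, 0 <= t -> exists I, is_RInt (h t) 0 t I /\ u t = g t + I) ->
 (forall t s, 0 <= s <= t -> h t s = g s * u (t - s)) ->
 (forall T, 0 <= T -> exists I, is_RInt k 0 T I) ->
 (forall x, 0 <= x <= / (2*A) -> u x <= 2*A + E) ->
 forall x, 0 <= x <= / (2*A) -> u x <= 2*A + E/2.
Proof.
  intros HA HE Hg Hk Heq Hh Hint Hwin x Hx.
  set (d := / (2*A)) in *.
  assert (Hd : 0 < d) by (unfold d; apply Rinv_0_lt_compat; lra).
  assert (HAd : 2 * A * d = 1) by (unfold d; field; lra).
  destruct (Heq x ltac:(lra)) as (I & HI & Hux).
  destruct (Hint x ltac:(lra)) as (K & HK).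
  assert (B : I <= (2*A+E) * K).
  { eapply isR_le; [exact HI| apply isR_scal; [lra|exact HK] | lra |].
    intros s Hs. rewrite Hh by lra. destruct (Hg s ltac:(lra)) as (g0 & gk & gA).
    assert (u (x - s) <= 2*A + E) by (apply Hwin; lra).
    apply Rle_trans with (g s * (2*A+E)); [apply Rmult_le_compat_l; lra|].
    rewrite Rmult_comm. apply Rmult_le_compat_l; lra. }
  assert (C : K <= A * (x - 0)).
  { apply isR_le_const with k; auto; [lra|]. intros s Hs. apply Hk; lra. }
  assert (C' : (2*A+E) * K <= (2*A+E) * (A*d)).
  { apply Rmult_le_compat_l; nra. }
  destruct (Hg x ltac:(lra)) as (g0 & gk & gA).
  rewrite Hux. nra.
Qed.

Lemma renewal_bound (A : R) (g k u : R -> R) (h : R -> R -> R) :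
 0 < A ->
 (forall s, 0 <= s -> 0 <= g s /\ g s <= k s /\ g s <= A) ->
 (forall s t, 0 <= s -> s <= t -> g t <= g s) ->
 (forall s, 0 <= s -> s <= / (2*A) -> k s <= A) ->
 (forall T, 0 <= T -> exists I, is_RInt k 0 T I /\ I <= 1) ->
 (forall T, 0 <= T -> exists M, forall t, 0 <= t <= T -> u t <= M) ->
 (forall t, 0 <= t -> exists I, is_RInt (h t) 0 t I /\ u t = g t + I) ->
 (forall t s, 0 <= s <= t -> h t s = g s * u (t - s)) ->
 forall t, 0 <= t -> u t <= 4*A.
Proof.
  intros HA Hg Hmon Hk Hint Hbd Heq Hh.
  set (d := / (2*A)).
  assert (Hd : 0 < d) by (unfold d; apply Rinv_0_lt_compat; lra).
  assert (Hint' : forall T, 0 <= T -> exists I, is_RInt k 0 T I).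
  { intros T HT; destruct (Hint T HT) as (I & HI & _); eauto. }
  assert (P : forall j : nat, forall x, 0 <= x <= (INR j + 1) * d ->
             u x <= (if Rle_dec x d then 2*A else 4*A)).
  { induction j as [|j IH].
    - intros x Hx. simpl in Hx. rewrite Rplus_0_l, Rmult_1_l in Hx.
      destruct (Rle_dec x d) as [_|]; [|lra].
      destruct (Hbd d ltac:(lra)) as (M & HM).
      apply (iter_bound (fun y => 0 <= y <= d) u (2*A) M); auto.
      intros E HE Hw. apply (window_base A g k u h E); auto.
    - intros x Hx. rewrite S_INR in Hx.
      destruct (Rle_dec x ((INR j + 1) * d)) as [Hle|Hgt].
      + apply IH; lra.
      + assert (Hj : 0 <= INR j) by apply pos_INR.
        assert (Hxd : d < x) by nra.
        destruct (Rle_dec x d) as [|_]; [lra|].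
        destruct (Hbd ((INR j + 2) * d) ltac:(nra)) as (M & HM).
        apply (iter_bound (fun y => (INR j + 1) * d <= y <= (INR j + 2) * d) u (4*A) M).
        * intros y Hy. apply HM. split; nra.
        * intros E HE Hw. apply (window_step A g k u h j E); auto.
        * split; lra. }
  intros t Ht.
  destruct (archimed (t / d)) as [Hup _].
  assert (Hn : 0 <= IZR (up (t/d))).
  { assert (0 <= t / d) by (unfold Rdiv; apply Rmult_le_pos; [lra|left; apply Rinv_0_lt_compat; lra]). lra. }
  destruct (IZN (up (t/d))) as [n Hn']. { apply le_IZR; lra. }
  rewrite Hn', <- INR_IZR_INZ in Hup.
  assert (Ht' : t <= (INR n + 1) * d).
  { assert (t = (t/d) * d) by (field; lra). nra. }
  pose proof (P n t ltac:(lra)). destruct (Rle_dec t d); lra.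
Qed.

Lemma exp_le_exp x y : x <= y -> exp x <= exp y.
Proof. intros [H|<-]; [left; apply exp_increasing; auto| lra]. Qed.

Lemma ln_le x y : 0 < x -> x <= y -> ln x <= ln y.
Proof. intros Hx [H|<-]; [left; apply ln_increasing; auto| lra]. Qed.

Lemma exp_quad x : 0 <= x -> exp (-x) <= 1 - x + x^2.
Proof.
  intros Hx.
  pose proof (exp_ineq1_le (x/2)) as H1.
  assert (Hex : exp x = exp (x/2) * exp (x/2)) by (rewrite <- exp_plus; f_equal; field).
  assert (H2 : 1 + x + x^2/4 <= exp x).
  { rewrite Hex. assert (0 <= 1 + x/2) by lra. 
    apply Rle_trans with ((1 + x/2)*(1+x/2)); [nra|]. apply Rmult_le_compat; lra. }
  assert (Hpos : 0 < exp x) by apply exp_pos.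
  rewrite exp_Ropp.
  assert (H3 : 1 <= (1 - x + x^2) * exp x).
  { apply Rle_trans with ((1 - x + x^2) * (1 + x + x^2/4)).
    - nra.
    - apply Rmult_le_compat_l; [nra|lra]. }
  apply Rmult_le_reg_r with (exp x); auto.
  rewrite Rinv_l by lra. lra.
Qed.

Lemma exp_pointwise th S p s : 0 <= th -> 0 < S -> 1 < p -> 0 < s ->
  exp (-(th*s)) <= 1 - th*s + th^2*S*s + th * Rpower S (1-p) * Rpower s p.
Proof.
  intros Hth HS Hp Hs.
  assert (HK : 0 < Rpower S (1-p) * Rpower s p) by (apply Rmult_lt_0_compat; apply exp_pos).
  destruct (Rle_or_lt s S) as [Hle|Hgt].
  - pose proof (exp_quad (th*s) ltac:(nra)) as H.
    assert (th^2 * s^2 <= th^2*S*s).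
    { assert (0 <= th^2) by nra. 
      replace (th^2*S*s) with (th^2*(S*s)) by ring. apply Rmult_le_compat_l; nra. }
    assert (0 <= th * (Rpower S (1-p) * Rpower s p)) by nra.
    replace ((th*s)^2) with (th^2*s^2) in H by ring. nra.
  - assert (Hks : s <= Rpower S (1-p) * Rpower s p).
    { unfold Rpower. rewrite <- exp_plus.
      rewrite <- (exp_ln s) at 1 by lra.
      apply exp_le_exp.
      assert (ln S <= ln s) by (apply ln_le; lra). nra. }
    assert (exp (-(th*s)) <= 1).
    { rewrite <- exp_0. apply exp_le_exp. nra. }
    assert (th * s <= th * (Rpower S (1-p) * Rpower s p)) by (apply Rmult_le_compat_l; lra).
    assert (0 <= th^2*S*s) by (assert (0 <= th^2) by nra; apply Rmult_le_pos; [apply Rmult_le_pos|]; lra).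
    nra.
Qed.

Lemma cv_const c : Un_cv (fun _ => c) c.
Proof. intros e He. exists 0%nat. intros. unfold Rdist. rewrite Rminus_diag, Rabs_R0. auto. Qed.

Lemma cv_ext_ev u v l N : Un_cv u l -> (forall n, (N <= n)%nat -> u n = v n) -> Un_cv v l.
Proof.
  intros H Huv e He. destruct (H e He) as [M HM]. exists (max N M). intros n Hn.
  rewrite <- Huv by lia. apply HM. lia.
Qed.

Lemma cv_ev_lt u l c : Un_cv u l -> l < c -> exists N, forall n, (N <= n)%nat -> u n < c.
Proof.
  intros H Hl. destruct (H (c - l) ltac:(lra)) as [N HN]. exists N. intros n Hn.
  specialize (HN n Hn). unfold Rdist in HN. apply Rabs_def2 in HN. lra.
Qed.

Lemma cv_ev_gt u l c : Un_cv u l -> c < l -> exists N, forall n, (N <= n)%nat -> c < u n.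
Proof.
  intros H Hl. destruct (H (l - c) ltac:(lra)) as [N HN]. exists N. intros n Hn.
  specialize (HN n Hn). unfold Rdist in HN. apply Rabs_def2 in HN. lra.
Qed.

Lemma cv_infty_sqrt u : cv_infty u -> cv_infty (fun n => sqrt (u n)).
Proof.
  intros H M. destruct (H (Rmax M 0 * Rmax M 0)) as [N HN]. exists N. intros n Hn.
  specialize (HN n Hn).
  assert (H0 : 0 <= Rmax M 0) by apply Rmax_r.
  assert (H1 : M <= Rmax M 0) by apply Rmax_l.
  assert (sqrt (Rmax M 0 * Rmax M 0) < sqrt (u n)) by (apply sqrt_lt_1_alt; split; nra).
  rewrite sqrt_square in H2 by lra. lra.
Qed.

Lemma cv_rpower_neg u q : cv_infty u -> q < 0 -> Un_cv (fun n => Rpower (u n) q) 0.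
Proof.
  intros H Hq e He. destruct (H (exp (ln e / q))) as [N HN]. exists N. intros n Hn.
  specialize (HN n Hn). unfold Rdist, Rpower. rewrite Rminus_0_r, Rabs_pos_eq by (left; apply exp_pos).
  assert (Hu : 0 < u n) by (pose proof (exp_pos (ln e / q)); lra).
  assert (Hl : ln e / q < ln (u n)).
  { rewrite <- (ln_exp (ln e / q)). apply ln_increasing; auto. apply exp_pos. }
  rewrite <- (exp_ln e) by lra. apply exp_increasing.
  apply Rmult_lt_reg_r with (- / q). { apply Ropp_0_gt_lt_contravar. apply Rinv_lt_0_compat; lra. }
  replace (q * ln (u n) * - / q) with (- ln (u n)) by (field; lra).
  replace (ln e * - / q) with (- (ln e / q)) by (field; lra). lra.
Qed.

Lemma cv_lim_eq u l l' : Un_cv u l -> l = l' -> Un_cv u l'.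
Proof. intros H <-; exact H. Qed.

Lemma cv_opp' u l : Un_cv u l -> Un_cv (fun n => - u n) (- l).
Proof. intros H. exact (CV_opp u l H). Qed.

Lemma improper_le f L T I : (forall x, 0 <= x -> 0 <= f x) -> is_improper_int0 f L ->
  0 <= T -> is_RInt f 0 T I -> I <= L.
Proof.
  intros Hf [Hex Hlim] HT HI. destruct (Rle_or_lt I L) as [|Hlt]; auto.
  destruct (Hlim (I - L) ltac:(lra)) as [T0 HT0].
  set (T' := Rmax T T0).
  assert (HT'1 : T <= T') by apply Rmax_l. assert (HT'2 : T0 <= T') by apply Rmax_r.
  destruct (Hex T' ltac:(lra)) as [I' HI'].
  destruct (isR_split _ _ _ T _ HI') as (I1 & I2 & H1 & H2 & E); [lra|].
  rewrite (isR_unique _ _ _ _ _ H1 HI) in E.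
  assert (0 * (T' - T) <= I2) by (apply isR_ge_const with f; auto; intros; apply Hf; lra).
  specialize (HT0 T' I' HT'2 ltac:(lra) HI'). apply Rabs_def2 in HT0. lra.
Qed.

Lemma kernel_int (F J : R -> R) (a c1 c2 eta sig l eps : R) :
  0 <= a -> 0 <= c1 -> 0 <= c2 -> 0 < eps ->
  is_improper_int0 F eta -> is_improper_int0 (fun s => s * F s) sig -> is_improper_int0 J l ->
  (forall x, 0 <= x -> 0 <= F x) -> (forall x, 0 <= x -> 0 <= J x) ->
  (forall s, 0 <= s -> 0 <= a * (F s - c1 * (s * F s) + c2 * J s)) ->
  a * (eta - c1 * (sig - eps) + c2 * l) <= 1 ->
  forall T, 0 <= T -> exists I, is_RInt (fun s => a * (F s - c1 * (s * F s) + c2 * J s)) 0 T I /\ I <= 1.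
Proof.
  intros Ha Hc1 Hc2 He HF HsF HJ F0 J0 k0 Hmain T HT.
  destruct HsF as [HsF1 HsF2]. destruct (HsF2 eps He) as [T0 HT0].
  set (T' := Rmax T T0).
  assert (HT'1 : T <= T') by apply Rmax_l. assert (HT'2 : T0 <= T') by apply Rmax_r.
  destruct (proj1 HF T' ltac:(lra)) as [IF HIF].
  destruct (HsF1 T' ltac:(lra)) as [IsF HIsF].
  destruct (proj1 HJ T' ltac:(lra)) as [IJ HIJ].
  assert (Hk : is_RInt (fun s => a * (F s - c1 * (s * F s) + c2 * J s)) 0 T'
                 (a * (IF + (- c1) * IsF + c2 * IJ))).
  { apply isR_scal; [lra|].
    pose proof (isR_lin _ _ _ _ _ _ c2 (isR_lin _ _ _ _ _ _ (-c1) HIF HIsF) HIJ) as H.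
    eapply isR_ext; [|  | exact H]; [lra|]. intros; simpl; ring. }
  assert (B1 : IF <= eta) by (apply (improper_le F eta T' IF F0 HF ltac:(lra) HIF)).
  assert (B2 : IJ <= l) by (apply (improper_le J l T' IJ J0 HJ ltac:(lra) HIJ)).
  specialize (HT0 T' IsF HT'2 ltac:(lra) HIsF). apply Rabs_def2 in HT0.
  assert (Htot : a * (IF + (- c1) * IsF + c2 * IJ) <= 1).
  { apply Rle_trans with (a * (eta - c1 * (sig - eps) + c2 * l)); auto.
    apply Rmult_le_compat_l; auto.
    assert (c1 * (sig - eps) <= c1 * IsF) by (apply Rmult_le_compat_l; lra).
    assert (c2 * IJ <= c2 * l) by (apply Rmult_le_compat_l; lra). lra. }
  destruct (isR_split _ _ _ T _ Hk) as (I1 & I2 & H1 & H2 & E); [lra|].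
  exists I1. split; auto.
  assert (0 * (T' - T) <= I2) by (apply isR_ge_const with (fun s => a * (F s - c1 * (s * F s) + c2 * J s)); auto; intros; apply k0; lra).
  lra.
Qed.

Lemma isR_bounded f a b I : a <= b -> is_RInt f a b I -> exists M, forall t, a <= t <= b -> Rabs (f t) <= M.
Proof.
  intros Hab [pr _].
  destruct (@RInt.ex_RInt_ub Hierarchy.R_NormedModule f a b (RInt.ex_RInt_Reals_1 f a b pr)) as [M HM].
  exists M. intros t Ht. apply HM. unfold Rmin, Rmax; destruct (Rle_dec a b); lra.
Qed.

Lemma per_n (F Ls Rf : R -> R) (a th S C0 eta sig l eps p A : R) :
  0 < A -> 0 < a -> 0 <= th -> 0 < S -> 1 < p -> 0 < C0 -> 0 < eps ->
  is_tail F -> is_tail Ls -> (forall t, 0 <= t -> F t <= C0 * Ls t) ->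
  is_improper_int0 F eta -> is_improper_int0 (fun s => s * F s) sig ->
  is_improper_int0 (fun t => (if Rlt_dec 0 t then Rpower t p else 0) * Ls t) l ->
  th * S <= 1 ->
  a * (1 + th^2 * S * / (2*A) + th * Rpower S (1-p) * C0 * Rpower (/ (2*A)) p) <= A ->
  a * (eta - (th - th^2*S) * (sig - eps) + th * Rpower S (1-p) * C0 * l) <= 1 ->
  (forall T, 0 <= T -> exists I, is_RInt Rf 0 T I) ->
  (forall t, 0 <= t -> exists I, is_RInt (fun s => Rf (t - s) * F s) 0 t I /\
       Rf t = a * F t + a * I) ->
  forall t, 0 <= t -> exp (-(th*t)) * Rf t <= 4*A.
Proof.
  intros HA Ha Hth HS Hp HC0 He HF HLs Hdom HFi HsFi HJi HthS HW Hmain HRi HReq.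
  set (d := / (2*A)) in *.
  assert (Hd : 0 < d) by (unfold d; apply Rinv_0_lt_compat; lra).
  set (K := Rpower S (1-p)) in *.
  assert (HK : 0 < K) by apply exp_pos.
  set (J := fun t => (if Rlt_dec 0 t then Rpower t p else 0) * Ls t) in *.
  destruct HF as (F01 & Fmon & _ & _). destruct HLs as (L01 & _ & _ & _).
  assert (J0 : forall x, 0 <= x -> 0 <= J x).
  { intros x Hx. unfold J. destruct (Rlt_dec 0 x).
    - apply Rmult_le_pos; [left; apply exp_pos| apply L01; lra].
    - specialize (L01 x Hx). lra. }
  assert (Jd : forall x, 0 <= x -> x <= d -> J x <= Rpower d p).
  { intros x Hx Hxd. unfold J. destruct (Rlt_dec 0 x).
    - apply Rle_trans with (Rpower x p * 1).
      + apply Rmult_le_compat_l; [left; apply exp_pos| apply L01; lra].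
      + rewrite Rmult_1_r. apply Rle_Rpower_l; lra.
    - specialize (L01 x Hx). pose proof (exp_pos (p * ln d)). unfold Rpower. nra. }
  set (c1 := th - th^2*S).
  assert (Hc1 : 0 <= c1) by (unfold c1; replace (th - th^2*S) with (th * (1 - th*S)) by ring; nra).
  set (c2 := th * K * C0).
  assert (Hc2 : 0 <= c2) by (unfold c2; apply Rmult_le_pos; [apply Rmult_le_pos|]; lra).
  set (g := fun s => a * exp (-(th*s)) * F s).
  set (k := fun s => a * (F s - c1 * (s * F s) + c2 * J s)).
  set (u := fun t => exp (-(th*t)) * Rf t).
  set (h := fun t s => (a * exp (-(th*t))) * (Rf (t - s) * F s)).
  assert (Hgk : forall s, 0 <= s -> 0 <= g s /\ g s <= k s).
  { intros s Hs. pose proof (F01 s Hs) as Fs. pose proof (exp_pos (-(th*s))) as Es.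
    split. { unfold g. apply Rmult_le_pos; [apply Rmult_le_pos|]; lra. }
    unfold g, k. rewrite Rmult_assoc. apply Rmult_le_compat_l; [lra|].
    destruct (Rle_or_lt s 0) as [Hs0|Hs0].
    - assert (s = 0) by lra. subst s. unfold J. destruct (Rlt_dec 0 0); [lra|].
      rewrite Rmult_0_r, Ropp_0, exp_0. lra.
    - pose proof (exp_pointwise th S p s Hth HS Hp Hs0) as Hpw. fold K in Hpw.
      assert (H1 : exp (-(th*s)) * F s <= (1 - th*s + th^2*S*s + th*K*Rpower s p) * F s)
        by (apply Rmult_le_compat_r; lra).
      assert (H2 : Rpower s p * F s <= C0 * J s).
      { unfold J. destruct (Rlt_dec 0 s); [|lra].
        pose proof (Hdom s Hs). pose proof (exp_pos (p * ln s)). unfold Rpower in *.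
        replace (C0 * (exp (p * ln s) * Ls s)) with (exp (p * ln s) * (C0 * Ls s)) by ring.
        apply Rmult_le_compat_l; lra. }
      assert (H3 : th*K*(Rpower s p * F s) <= th*K*(C0 * J s))
        by (apply Rmult_le_compat_l; [apply Rmult_le_pos|]; lra).
      unfold c1, c2. nra. }
  assert (HgA : forall s, 0 <= s -> g s <= A).
  { intros s Hs. pose proof (F01 s Hs) as Fs.
    assert (exp (-(th*s)) <= 1) by (rewrite <- exp_0; apply exp_le_exp; nra).
    assert (0 <= th^2 * S * d) by (apply Rmult_le_pos; [apply Rmult_le_pos|]; nra).
    assert (0 <= th * K * C0 * Rpower d p) by (apply Rmult_le_pos; [exact Hc2|left; apply exp_pos]).
    unfold g. pose proof (exp_pos (-(th*s))).
    assert (a * exp (-(th*s)) * F s <= a) by (rewrite Rmult_assoc; 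
      apply Rle_trans with (a * 1); [apply Rmult_le_compat_l; nra|lra]).
    nra. }
  assert (Hmon : forall s t, 0 <= s -> s <= t -> g t <= g s).
  { intros s t Hs Hst. unfold g. rewrite !Rmult_assoc. apply Rmult_le_compat_l; [lra|].
    pose proof (F01 s Hs). pose proof (F01 t ltac:(lra)). pose proof (Fmon s t Hs Hst).
    assert (exp (-(th*t)) <= exp (-(th*s))) by (apply exp_le_exp; nra).
    pose proof (exp_pos (-(th*t))). apply Rmult_le_compat; lra. }
  assert (Hkd : forall s, 0 <= s -> s <= d -> k s <= A).
  { intros s Hs Hsd. pose proof (F01 s Hs) as Fs.
    apply Rle_trans with (a * (1 + th^2 * S * d + th * K * C0 * Rpower d p)); [|exact HW].
    unfold k. apply Rmult_le_compat_l; [lra|].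
    pose proof (Jd s Hs Hsd).
    assert (s * F s <= d) by nra.
    assert (0 <= th * (s * F s)) by (apply Rmult_le_pos; nra).
    assert (th^2*S*(s*F s) <= th^2*S*d) by (apply Rmult_le_compat_l; [apply Rmult_le_pos|]; nra).
    assert (c2 * J s <= c2 * Rpower d p) by (apply Rmult_le_compat_l; lra).
    unfold c1, c2 in *. nra. }
  assert (Hint : forall T, 0 <= T -> exists I, is_RInt k 0 T I /\ I <= 1).
  { apply (kernel_int F J a c1 c2 eta sig l eps); auto; try lra.
    - intros x Hx; apply F01; auto.
    - intros s Hs. destruct (Hgk s Hs). fold (k s). lra. }
  assert (Hbd : forall T, 0 <= T -> exists M, forall t, 0 <= t <= T -> u t <= M).
  { intros T HT. destruct (HRi T HT) as [I HI].
    destruct (isR_bounded Rf 0 T I HT HI) as [M HM]. exists M. intros t Ht.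
    unfold u. specialize (HM t Ht).
    assert (exp (-(th*t)) <= 1) by (rewrite <- exp_0; apply exp_le_exp; nra).
    pose proof (exp_pos (-(th*t))).
    apply Rle_trans with (exp (-(th*t)) * Rabs (Rf t)).
    - apply Rmult_le_compat_l; [lra| apply Rle_abs].
    - pose proof (Rabs_pos (Rf t)). nra. }
  assert (Heq : forall t, 0 <= t -> exists I, is_RInt (h t) 0 t I /\ u t = g t + I).
  { intros t Ht. destruct (HReq t Ht) as (I & HI & EI).
    exists ((a * exp (-(th*t))) * I). split.
    - apply isR_scal; auto.
    - unfold u, g. rewrite EI. ring. }
  assert (Hh : forall t s, 0 <= s <= t -> h t s = g s * u (t - s)).
  { intros t s Hs. unfold h, g, u.
    replace (exp (-(th*t))) with (exp (-(th*s)) * exp (-(th*(t-s)))).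
    - ring.
    - rewrite <- exp_plus. f_equal. ring. }
  intros t Ht.
  apply (renewal_bound A g k u h HA); auto.
  intros s Hs. destruct (Hgk s Hs). split; [|split]; auto.
Qed.

Ltac cvt := repeat first [assumption | apply cv_const | apply CV_minus | apply CV_plus | apply cv_opp' | apply CV_mult].

Theorem lemma5p2
  (lam : nat -> R) (Lbar : nat -> R -> R) (eta sigma : nat -> R)
  (p q : nat -> nat -> R) (mn : nat -> R) (gam : nat -> R)
  (gstar lam_l eta_l sigma_l b m : R) (psi phi : R -> R)
  (alpha beta : R) (Rn : nat -> R -> R) :
  (* standing assumptions, n >= 1 *)
  (forall n, (1 <= n)%nat -> 0 < lam n) ->
  (forall n, (1 <= n)%nat -> is_tail (Lbar n)) ->
  (forall n, (1 <= n)%nat -> is_improper_int0 (Lbar n) (eta n)) ->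
  (forall n, (1 <= n)%nat -> is_improper_int0 (fun t => t * Lbar n t) (sigma n)) ->
  (forall n, (1 <= n)%nat -> prob_Zplus (p n) /\ prob_Zplus (q n)) ->
  (forall n, (1 <= n)%nat -> infinite_sum (fun k => INR k * p n k) (mn n)) ->
  (forall n, (1 <= n)%nat -> 0 < gam n) ->
  cv_infty gam ->
  Un_cv (fun n => gam n / INR n) gstar -> 0 <= gstar ->
  (* Condition 1 *)
  Un_cv lam lam_l -> 0 < lam_l ->
  Un_cv eta eta_l -> 0 < eta_l ->
  Un_cv sigma sigma_l -> 0 < sigma_l ->
  Un_cv (fun n => gam n * (1 - lam n * eta n)) b ->
  unif_cv_compacts (fun n z => psi_n (q n) n (gam n) z) psi ->
  unif_lipschitz_bounded (fun n z => phi_n (p n) n (gam n) z) ->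
  unif_cv_compacts (fun n z => phi_n (p n) n (gam n) z) phi ->
  continuous_on_Rplus phi ->
  (* m := lim gamma_n (1 - m^(n)) (exists under Condition 1) *)
  Un_cv (fun n => gam n * (1 - mn n)) m ->
  (* Condition 2 *)
  1 < alpha -> alpha < 2 ->
  (exists C k0, 0 < C /\ 0 < k0 /\
     forall n M, (1 <= n)%nat ->
       INR n * gam n *
         sum_f_R0 (fun k => if Rle_dec k0 (INR k)
                            then Rpower (INR k / INR n) alpha * p n k else 0) M
       + sum_f_R0 (fun k => Rpower (INR k) alpha * q n k) M <= C) ->
  (forall eps, 0 < eps -> exists K1, forall k1, (K1 <= k1)%nat ->
     exists N, forall n M, (N <= n)%nat -> (1 <= n)%nat ->
       gam n * sum_f_R0 (fun k => if Nat.leb k1 k then INR k * p n k else 0) M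
         <= eps) ->
  (exists C0 Lstar, 0 < C0 /\ is_tail Lstar /\
     (exists l, is_improper_int0
        (fun t => (if Rlt_dec 0 t then Rpower t (2 * alpha - 1) else 0)
                  * Lstar t) l) /\
     forall n t, (1 <= n)%nat -> 0 <= t -> Lbar n t <= C0 * Lstar t) ->
  (* beta *)
  0 <= beta -> - (b + m) / (sigma_l * lam_l) < beta ->
  (* R^(n): the locally integrable solution of the renewal equation *)
  (forall n, (1 <= n)%nat ->
     (forall T, 0 <= T -> exists I, is_RInt (Rn n) 0 T I) /\
     forall t, 0 <= t -> exists I,
       is_RInt (fun s => Rn n (t - s) * Lbar n s) 0 t I /\
       Rn n t = lam n * mn n * Lbar n t + lam n * mn n * I) ->
  exists (n0 : nat) (C : R), (1 <= n0)%nat /\ 0 < C /\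
    forall n, (n0 < n)%nat -> forall t, 0 <= t ->
      exp (- beta * t / gam n) * Rn n t <= C.
Proof.
  intros Hlam Htail Heta Hsig Hpq Hmn Hgam Hinf Hgs Hgs0 Clam Hlaml Ceta Hetal Csig Hsigl
    Cb Hpsi Hlip Hphi Hphic Cm Ha1 Ha2 Hc2a Hc2b HLs Hb0 Hb HR.
  destruct HLs as (C0 & Ls & HC0 & HLt & (l & Hl) & Hdom).
  set (pp := 2 * alpha - 1) in *.
  assert (Hp : 1 < pp) by (unfold pp; lra).
  set (A := 2 * lam_l).
  assert (HA : 0 < A) by (unfold A; lra).
  set (d := / (2 * A)).
  set (a := fun n => lam n * mn n).
  set (th := fun n => beta / gam n).
  set (Sq := fun n => sqrt (gam n)).
  set (K := fun n => Rpower (Sq n) (1 - pp)).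
  set (D := b + m + beta * lam_l * sigma_l).
  assert (HD : 0 < D).
  { unfold D. assert (0 < sigma_l * lam_l) by nra.
    apply Rmult_lt_compat_r with (r := sigma_l * lam_l) in Hb; auto.
    unfold Rdiv in Hb. rewrite Rmult_assoc, Rinv_l in Hb by lra. lra. }
  set (eps := D / (2 * (beta * lam_l + 1))).
  assert (Heps : 0 < eps) by (unfold eps; apply Rdiv_lt_0_compat; nra).
  assert (Hig : Un_cv (fun n => / gam n) 0) by (apply cv_infty_cv_0; auto).
  assert (Hmn1 : Un_cv mn 1).
  { apply (cv_ext_ev (fun n => 1 - gam n * (1 - mn n) * / gam n) _ _ 1).
    - apply (cv_lim_eq _ (1 - m * 0)); [|ring]. apply CV_minus; [apply cv_const|].
      apply CV_mult; auto.
    - intros n Hn. pose proof (Hgam n Hn). field. lra. }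
  assert (Ha : Un_cv a lam_l).
  { apply (cv_lim_eq _ (lam_l * 1)); [|ring]. apply CV_mult; auto. }
  assert (Hle : Un_cv (fun n => lam n * eta n) 1).
  { apply (cv_ext_ev (fun n => 1 - gam n * (1 - lam n * eta n) * / gam n) _ _ 1).
    - apply (cv_lim_eq _ (1 - b * 0)); [|ring]. apply CV_minus; [apply cv_const|].
      apply CV_mult; auto.
    - intros n Hn. pose proof (Hgam n Hn). field. lra. }
  assert (HG4 : Un_cv (fun n => gam n * (a n * eta n - 1)) (- b - m)).
  { apply (cv_ext_ev (fun n => - (gam n * (1 - lam n * eta n)) - (lam n * eta n) * (gam n * (1 - mn n))) _ _ 0).
    - apply (cv_lim_eq _ (- b - 1 * m)); [|ring]. apply CV_minus.
      + apply (cv_lim_eq _ (- b)); [|ring]. apply (CV_opp _ _ Cb).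
      + apply CV_mult; auto.
    - intros n _. unfold a. ring. }
  assert (HinfS : cv_infty Sq) by (apply cv_infty_sqrt; auto).
  assert (HiS : Un_cv (fun n => / Sq n) 0) by (apply cv_infty_cv_0; auto).
  assert (HK : Un_cv K 0) by (apply cv_rpower_neg; auto; lra).
  assert (Hth : Un_cv th 0).
  { apply (cv_lim_eq _ (beta * 0)); [|ring]. apply (cv_ext_ev (fun n => beta * / gam n) _ _ 0).
    - apply CV_mult; [apply cv_const|auto].
    - intros n _. unfold th. unfold Rdiv. ring. }
  assert (HSpos : forall n, (1 <= n)%nat -> 0 < Sq n) by (intros n Hn; apply sqrt_lt_R0; auto).
  assert (HthS : Un_cv (fun n => th n * Sq n) 0).
  { apply (cv_lim_eq _ (beta * 0)); [|ring]. apply (cv_ext_ev (fun n => beta * / Sq n) _ _ 1).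
    - apply CV_mult; [apply cv_const|auto].
    - intros n Hn. unfold th. pose proof (HSpos n Hn). 
      assert (Hss : gam n = Sq n * Sq n) by (unfold Sq; rewrite sqrt_sqrt; auto; left; auto).
      rewrite Hss. field. lra. }
  assert (Hth2S : Un_cv (fun n => th n ^ 2 * Sq n) 0).
  { apply (cv_lim_eq _ (0 * 0)); [|ring]. apply (cv_ext_ev (fun n => th n * (th n * Sq n)) _ _ 0).
    - apply CV_mult; auto.
    - intros n _. ring. }
  assert (HthK : Un_cv (fun n => th n * K n) 0).
  { apply (cv_lim_eq _ (0 * 0)); [|ring]. apply CV_mult; auto. }
  set (W := fun n => th n ^ 2 * Sq n * d + th n * K n * C0 * Rpower d pp).
  assert (HW : Un_cv W 0).
  { apply (cv_lim_eq _ (0 * d + 0 * (C0 * Rpower d pp))); [|ring].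
    apply (cv_ext_ev (fun n => th n ^ 2 * Sq n * d + th n * K n * (C0 * Rpower d pp)) _ _ 0).
    - apply CV_plus; apply CV_mult; auto; apply cv_const.
    - intros n _. unfold W. ring. }
  assert (HaW : Un_cv (fun n => a n * (1 + W n)) lam_l).
  { apply (cv_lim_eq _ (lam_l * (1 + 0))); [|ring]. apply CV_mult; auto.
    apply CV_plus; auto; apply cv_const. }
  set (V := fun n => gam n * (a n * eta n - 1) - a n * beta * (1 - th n * Sq n) * (sigma n - eps)
                     + a n * beta * K n * C0 * l).
  assert (HV : Un_cv V ((- b - m) - lam_l * beta * (1 - 0) * (sigma_l - eps) + lam_l * beta * 0 * C0 * l)).
  { unfold V. cvt. }
  assert (HVneg : (- b - m) - lam_l * beta * (1 - 0) * (sigma_l - eps) + lam_l * beta * 0 * C0 * l < 0).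
  { assert (beta * lam_l * eps < D / 2).
    { unfold eps. apply Rmult_lt_reg_r with (2 * (beta * lam_l + 1)); [nra|].
      replace (beta * lam_l * (D / (2 * (beta * lam_l + 1))) * (2 * (beta * lam_l + 1)))
        with (beta * lam_l * D) by (field; nra). nra. }
    unfold D in *. nra. }
  destruct (cv_ev_lt _ _ _ HV HVneg) as [N1 HN1].
  destruct (cv_ev_lt _ _ A HaW ltac:(unfold A; lra)) as [N2 HN2].
  destruct (cv_ev_gt _ _ 0 Ha Hlaml) as [N3 HN3].
  destruct (cv_ev_lt _ _ 1 HthS ltac:(lra)) as [N4 HN4].
  exists (S (N1 + N2 + N3 + N4)), (4 * A). split; [lia|]. split; [lra|].
  intros n Hn t Ht.
  assert (Hn1 : (1 <= n)%nat) by lia.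
  pose proof (Hgam n Hn1) as Hg.
  pose proof (HN1 n ltac:(lia)) as E1. pose proof (HN2 n ltac:(lia)) as E2.
  pose proof (HN3 n ltac:(lia)) as E3. pose proof (HN4 n ltac:(lia)) as E4.
  destruct (HR n Hn1) as [HRi HReq].
  assert (Hth0 : 0 <= th n) by (unfold th; apply Rmult_le_pos; [lra|left; apply Rinv_0_lt_compat; lra]).
  assert (Hmain : a n * (eta n - (th n - th n ^ 2 * Sq n) * (sigma n - eps) + th n * Rpower (Sq n) (1 - pp) * C0 * l) <= 1).
  { assert (Heq : gam n * (a n * (eta n - (th n - th n ^ 2 * Sq n) * (sigma n - eps) + th n * Rpower (Sq n) (1 - pp) * C0 * l) - 1) = V n).
    { unfold V, K, th. field. lra. }
    assert (gam n * (a n * (eta n - (th n - th n ^ 2 * Sq n) * (sigma n - eps) + th n * Rpower (Sq n) (1 - pp) * C0 * l) - 1) < 0) by lra.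
    assert (a n * (eta n - (th n - th n ^ 2 * Sq n) * (sigma n - eps) + th n * Rpower (Sq n) (1 - pp) * C0 * l) - 1 < 0) by nra.
    lra. }
  assert (HWn : a n * (1 + th n ^ 2 * Sq n * / (2 * A) + th n * Rpower (Sq n) (1 - pp) * C0 * Rpower (/ (2 * A)) pp) <= A).
  { unfold W, K, d in E2. lra. }
  pose proof (per_n (Lbar n) Ls (Rn n) (a n) (th n) (Sq n) C0 (eta n) (sigma n) l eps pp A
     HA E3 Hth0 (HSpos n Hn1) Hp HC0 Heps (Htail n Hn1) HLt (fun t Ht => Hdom n t Hn1 Ht)
     (Heta n Hn1) (Hsig n Hn1) Hl ltac:(lra) HWn Hmain HRi HReq t Ht) as Hfin.
  replace (- beta * t / gam n) with (- (th n * t)) by (unfold th; field; lra).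
  exact Hfin.
Qed.
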